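(* There is an absolute constant $C>0$ such that the following holds. Let $B=(U\cup V,E)$ be a bipartite graph with $n\ge2$ nodes in which every node of $U$ has degree at least $d$ and every node of $V$ has degree at most $f<d$. Let $M$ be any matching of $B$ and let $s\in U$ be a node not matched by $M$. Then there is an augmenting path for $M$ starting at $s$ of length at most $C\,d\log n$.
   Context: An augmenting path for a matching $M$ is a path whose edges alternate between edges not in $M$ and edges in $M$, and whose two endpoints are both unmatched by $M$ (so it starts and ends with non-$M$ edges). *)

(* Defs.v *)
From HB Require Import structures.
From mathcomp Require Import all_boot.
From Stdlib Require Import Reals.
Set Implicit Arguments. Unset Strict Implicit. Unset Printing Implicit Defensive.

Section Graphs.
Variable T : finType.

Definition bipartite_graph (inU : pred T) (e : rel T) : Prop :=
  [/\ irreflexive e, symmetric e & forall x y, e x y -> inU x != inU y].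

Definition deg (e : rel T) (x : T) : nat := #|[set y | e x y]|.

Definition is_matching (e M : rel T) : Prop :=
  [/\ forall x y, M x y -> e x y, symmetric M &
      forall x y z, M x y -> M x z -> y = z].

Definition matched (M : rel T) (x : T) : bool := [exists y, M x y].

(* The path s :: p (vertices s = p_0, p_1, ..., p_k with k = size p edges)
   is an augmenting path for M starting at s: a (simple) path in e with at
   least one edge, whose edges alternate non-M, M, non-M, ..., and whose two
   endpoints are unmatched by M. *)
Definition augmenting_path (e M : rel T) (s : T) (p : seq T) : Prop :=
  [/\ path e s p, uniq (s :: p), 0 < size p,
      (forall i, i < size p ->
         M (nth s (s :: p) i) (nth s (s :: p) i.+1) = odd i) &
      ~~ matched M s /\ ~~ matched M (last s p)].
End Graphs.

(* Main.v *)
Require Import Defs.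
From HB Require Import structures.
From mathcomp Require Import all_boot.
From mathcomp Require Import zify.
From Stdlib Require Import ClassicalEpsilon Classical.
Set Implicit Arguments. Unset Strict Implicit. Unset Printing Implicit Defensive.

Section Aug.
Variables (T : finType) (inU : pred T) (e M : rel T) (s : T).
Hypotheses (Hb : bipartite_graph inU e) (HM : is_matching e M)
  (Hs : inU s) (Hsm : ~~ matched M s).

Lemma parity x p : path e x p -> forall i, i <= size p ->
  inU (nth x (x :: p) i) = inU x (+) odd i.
Proof.
elim: p x => [|y p IH] x /=.
  by move=> _ i; rewrite leqn0 => /eqP ->; rewrite addbF.
case/andP=> exy hp [|i] hi /=; first by rewrite addbF.
rewrite (set_nth_default y x); last by [].
rewrite IH //.
case: Hb => _ _ H; have := H _ _ exy.
by case: (inU x); case: (inU y); case: (odd i).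
Qed.

Lemma Msym x y : M x y -> M y x.
Proof. by case: HM => _ hs _; rewrite hs. Qed.
Lemma Mfun x y z : M x y -> M x z -> y = z.
Proof. by case: HM => _ _ h; apply: h. Qed.
Lemma Medge x y : M x y -> e x y.
Proof. by case: HM => h _ _; apply: h. Qed.
Lemma matchedP x y : M x y -> matched M x.
Proof. by move=> h; apply/existsP; exists y. Qed.

Definition alt (p : seq T) := [/\ path e s p, uniq (s :: p) &
  forall i, i < size p -> M (nth s (s :: p) i) (nth s (s :: p) i.+1) = odd i].

Lemma alt_inU p i : alt p -> i <= size p -> inU (nth s (s :: p) i) = ~~ odd i.
Proof. by case=> hp _ _ hi; rewrite parity // Hs. Qed.

Lemma nth_rc p v i : nth s (s :: rcons p v) i =
  if i < (size p).+1 then nth s (s :: p) i else if i == (size p).+1 then v else s.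
Proof. by rewrite -rcons_cons nth_rcons. Qed.

Lemma last_U p : alt p -> ~~ odd (size p) -> inU (last s p).
Proof. by move=> ha hev; rewrite (last_nth s) alt_inU. Qed.

Lemma inU_nbr u v : inU u -> e u v -> inU v = false.
Proof. by case: Hb => _ _ H hu huv; have := H _ _ huv; rewrite hu; case: (inU v). Qed.

Lemma notin_path p v : alt p -> ~~ odd (size p) -> inU v = false ->
  v \in s :: p -> exists2 i, odd i & (i < size p) && (nth s (s :: p) i == v).
Proof.
move=> ha hev hv vin.
have hi : index v (s :: p) < size (s :: p) by rewrite index_mem.
have nv : nth s (s :: p) (index v (s :: p)) = v by apply: nth_index.
exists (index v (s :: p)).
  have := alt_inU ha (i := index v (s :: p)); rewrite nv hv.
  by move=> h; have := h hi; case: (odd _).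
have hodd : odd (index v (s :: p)).
  have := alt_inU ha (i := index v (s :: p)); rewrite nv hv.
  by move=> h; have := h hi; case: (odd _).
rewrite nv eqxx andbT.
move: hi; rewrite /= ltnS leq_eqVlt => /orP [/eqP E|] //.
by move: hev; rewrite -E hodd.
Qed.

Lemma aug_end p u v : alt p -> ~~ odd (size p) -> last s p = u -> e u v ->
  ~~ matched M v -> augmenting_path e M s (rcons p v).
Proof.
move=> ha hev hl huv hvm.
have hu : inU u by rewrite -hl last_U.
have hv := inU_nbr hu huv.
have vnot : v \notin s :: p.
  apply/negP=> vin; have [i hodd /andP [hi /eqP nv]] := notin_path ha hev hv vin.
  case: (ha) => _ _ hM; have := hM i hi; rewrite hodd nv => h.
  by move/negP: hvm; apply; apply: matchedP h.
case: (ha) => hp hu' hM.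
split.
- by rewrite rcons_path hp hl.
- by rewrite -rcons_cons rcons_uniq vnot hu'.
- by rewrite size_rcons.
- move=> i; rewrite size_rcons ltnS leq_eqVlt => /orP [/eqP ->|hi].
    rewrite !nth_rc ltnSn eqxx ltnn -last_nth hl (negbTE hev).
    apply/negP => /Msym h; by move/negP: hvm; apply; apply: matchedP h.
  rewrite !nth_rc ltnS (ltnW hi) ltnS hi; exact: hM.
- by split=> //; rewrite last_rcons.
Qed.
Lemma ext p u v w : alt p -> ~~ odd (size p) -> last s p = u -> e u v -> M v w ->
  (exists q, [/\ alt q, ~~ odd (size q), size q <= size p & last s q = w])
  \/ alt (rcons (rcons p v) w).
Proof.
move=> ha hev hl huv hvw.
have hu : inU u by rewrite -hl last_U.
have hv := inU_nbr hu huv.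
have hw : inU w.
  by case: Hb => _ _ H; have := H _ _ (Medge hvw); rewrite hv; case: (inU w).
case: (ha) => hp hu' hM.
case vin: (v \in s :: p).
  left; have [i hodd /andP [hi /eqP nv]] := notin_path ha hev hv vin.
  have hMi := hM i hi; rewrite hodd nv in hMi.
  have wE := Mfun hvw hMi.
  have hsz : size (take i.+1 p) = i.+1 by rewrite size_takel.
  have hnth : forall j, j < i.+2 -> nth s (s :: take i.+1 p) j = nth s (s :: p) j.
    by move=> j hj; rewrite -[s :: take _ _]/(take i.+2 (s :: p)) nth_take.
  exists (take i.+1 p); split.
  - split; first exact: take_path.
    + by rewrite -[s :: take _ _]/(take i.+2 (s :: p)) take_uniq.
    + move=> j; rewrite hsz => hj.
      rewrite !hnth //; [exact: hM (leq_trans hj hi)|exact: ltnW hj].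
  - by rewrite hsz /= hodd.
  - by rewrite hsz.
  - by rewrite (last_nth s) hsz hnth // wE.
right.
have win : w \notin s :: p.
  apply/negP => win.
  have hj : index w (s :: p) < size (s :: p) by rewrite index_mem.
  have nw : nth s (s :: p) (index w (s :: p)) = w by apply: nth_index.
  have := alt_inU ha (i := index w (s :: p)) hj; rewrite nw hw.
  case E: (index w (s :: p)) => [|j] hoj.
    move: nw; rewrite E /= => ws.
    by move/negP: Hsm; apply; apply: (@matchedP _ v); rewrite ws; apply: Msym.
  have hjp : j < size p by rewrite E /= ltnS in hj.
  have := hM j hjp; rewrite -E nw.
  have -> : odd j by move: hoj; rewrite /=; case: (odd j).
  move=> hMj.
  have vE := Mfun (Msym hMj) (Msym hvw).
  move/negP: vin; apply; rewrite -vE; apply: mem_nth; exact: ltnW hjp.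
have nMuv : M u v = false.
  apply/negP => hMuv.
  have uw := Mfun (Msym hMuv) hvw.
  move/negP: win; apply; rewrite -uw -hl; exact: mem_last.
split.
- by rewrite !rcons_path hp hl huv last_rcons (Medge hvw).
- rewrite -!rcons_cons !rcons_uniq mem_rcons in_cons negb_or win andbT vin hu' /=.
  rewrite andbT; apply/eqP => wv; move: hv hw; rewrite wv => -> //.
- move=> i; rewrite !size_rcons => hi.
  rewrite -!rcons_cons !nth_rcons !size_rcons /=.
  case: (ltngtP i (size p)) => [hlt|hgt|->].
  + have -> : i < (size p).+2 by move: hlt; clear; lia.
    have -> : i < (size p).+1 by move: hlt; clear; lia.
    have -> : i.+1 < (size p).+2 by move: hlt; clear; lia.
    have -> : i.+1 < (size p).+1 by move: hlt; clear; lia.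
    exact: hM.
  + have -> : i = (size p).+1 by move: hgt hi; clear; lia.
    rewrite ltnSn ltnn eqxx /=.
    have -> : (size p).+2 < (size p).+2 = false by clear; lia.
    by rewrite eqxx /= (negbTE hev).
  + rewrite ltnSn /=.
    have -> : size p < (size p).+2 by clear; lia.
    rewrite -(last_nth s) hl ?ltnSn ?ltnn ?eqxx /= nMuv; by rewrite (negbTE hev).
Qed.


Definition asb (P : Prop) : bool := if excluded_middle_informative P then true else false.
Lemma asbP P : asb P <-> P.
Proof. by rewrite /asb; case: excluded_middle_informative. Qed.

Definition Good k u := exists p, [/\ alt p, ~~ odd (size p), size p <= k.*2 & last s p = u].
Definition R k := [set u | asb (Good k u)].
Lemma inR k u : (u \in R k) <-> Good k u.
Proof. by rewrite inE asbP. Qed.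

Lemma s_in_R k : s \in R k.
Proof. by apply/inR; exists [::]; split. Qed.

Lemma R_U k u : u \in R k -> inU u.
Proof. by case/inR=> p [ha hev _ <-]; apply: last_U. Qed.

Lemma deg_sum (x : T) (A : {set T}) : (forall y, e x y -> y \in A) ->
  deg e x = \sum_(y in A) (e x y : nat).
Proof.
move=> h; rewrite /deg -sum1_card big_mkcond [RHS]big_mkcond /=.
apply: eq_bigr => y _; rewrite inE.
case exy: (e x y); first by rewrite (h _ exy).
by case: (y \in A).
Qed.

Lemma deg_ge (x : T) (A : {set T}) : \sum_(y in A) (e y x : nat) <= deg e x.
Proof.
rewrite /deg -sum1_card big_mkcond [X in _ <= X]big_mkcond /=.
apply: leq_sum => y _; rewrite inE.
case: Hb => _ hsym _; rewrite (hsym y x).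
by case: (y \in A); case: (e x y).
Qed.

Variables (d f : nat).
Hypotheses (Hd : forall u, inU u -> d <= deg e u)
  (Hf : forall v, ~~ inU v -> deg e v <= f).

Definition partner v := odflt v [pick w | M v w].

Lemma step k : (forall p, augmenting_path e M s p -> k.*2.+1 < size p) ->
  d * #|R k| + f <= f * #|R k.+1|.
Proof.
move=> noaug.
set N := [set v | [exists u in R k, e u v]].
have NV : forall v, v \in N -> ~~ inU v.
  move=> v; rewrite inE => /existsP [u /andP [hu huv]].
  by rewrite (inU_nbr (R_U hu) huv).
have h1 : d * #|R k| <= \sum_(u in R k) \sum_(v in N) (e u v : nat).
  rewrite mulnC -sum_nat_const; apply: leq_sum => u hu.
  rewrite -deg_sum; first exact: Hd (R_U hu).
  by move=> y huy; rewrite inE; apply/existsP; exists u; rewrite hu.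
have h2 : \sum_(v in N) \sum_(u in R k) (e u v : nat) <= #|N| * f.
  rewrite -sum_nat_const; apply: leq_sum => v hv.
  exact: leq_trans (deg_ge _ _) (Hf (NV _ hv)).
rewrite exchange_big /= in h1.
have hpart : forall v, v \in N -> M v (partner v) /\ partner v \in R k.+1.
  move=> v; rewrite inE => /existsP [u /andP [hu huv]].
  case/inR: hu => p [ha hev hsz hl].
  have hm : matched M v.
    case hmv: (matched M v) => //.
    have := noaug _ (aug_end ha hev hl huv (negbT hmv)).
    by rewrite size_rcons ltnS leqNgt ltnS hsz.
  have hMp : M v (partner v).
    rewrite /partner; case: pickP => [w //|none].
    by case/existsP: hm => y hy; rewrite none in hy.
  split=> //; apply/inR.
  case: (ext ha hev hl huv hMp) => [[q [hq hevq hszq hlq]]|hrc].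
    exists q; split=> //; rewrite doubleS; apply: (leq_trans hszq).
    by apply: (leq_trans hsz); rewrite -addn2 leq_addr.
  exists (rcons (rcons p v) (partner v)); split=> //.
  - by rewrite !size_rcons /= negbK.
  - by rewrite !size_rcons doubleS !ltnS.
  - by rewrite last_rcons.
have hinj : {in N &, injective partner}.
  move=> v1 v2 h1' h2' heq.
  have [hm1 _] := hpart _ h1'; have [hm2 _] := hpart _ h2'.
  rewrite heq in hm1.
  exact: Mfun (Msym hm1) (Msym hm2).
have hsub : partner @: N \subset R k.+1 :\ s.
  apply/subsetP => w /imsetP [v hv ->].
  have [hm hin] := hpart _ hv.
  rewrite in_setD1 hin andbT; apply/eqP => ws.
  by move/negP: Hsm; apply; apply: (@matchedP _ v); rewrite -ws; apply: Msym.
have hcard := subset_leq_card hsub.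
rewrite card_in_imset // in hcard.
have := cardsD1 s (R k.+1); rewrite s_in_R => hR.
move: h1 h2 hcard hR.
set a := \sum_(_ in _) _.
move=> h1 h2 hcard hR.
have hfN : f * #|N| + f <= f * #|R k.+1|.
  by rewrite addnC -mulnS leq_mul2l hR add1n ltnS hcard orbT.
apply: (leq_trans _ hfN); rewrite leq_add2r (mulnC f).
exact: leq_trans h1 h2.
Qed.

Lemma grow K : (forall p, augmenting_path e M s p -> K.*2.+1 < size p) -> f < d ->
  forall k, k <= K -> (f + 1) ^ k <= f ^ k * #|R k|.
Proof.
move=> noaug hfd; elim=> [|k IH] hk.
  by rewrite !expn0 mul1n card_gt0; apply/set0Pn; exists s; apply: s_in_R.
have st : d * #|R k| + f <= f * #|R k.+1|.
  apply: step => p hp; apply: leq_trans (noaug p hp).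
  by move: hk; clear; lia.
have IH' := IH (ltnW hk).
rewrite !expnS.
apply: (@leq_trans ((f + 1) * (f ^ k * #|R k|))); first by rewrite leq_mul2l IH' orbT.
rewrite mulnCA -mulnA [X in _ <= X]mulnCA leq_mul2l; apply/orP; right.
apply: leq_trans st; rewrite mulnC; apply: leq_trans (leq_addr _ _).
by rewrite mulnC leq_mul2r addn1 hfd orbT.
Qed.
End Aug.

Lemma bern_aux f a : f * (f + a.+1) <= (f + a) * (f + 1).
Proof. nia. Qed.

Lemma bern f a : f ^ a * (f + a) <= f * (f + 1) ^ a.
Proof.
elim: a => [|a IH]; first by rewrite !expn0 addn0 mul1n muln1.
rewrite !expnS.
move: IH; set X := f ^ a; set Y := (f + 1) ^ a => IH.
have h1 : X * (f + a) * (f + 1) <= f * Y * (f + 1) by rewrite leq_mul2r IH orbT.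
have h := bern_aux f a.
have h2 : f * X * (f + a.+1) <= X * (f + a) * (f + 1).
  by rewrite (mulnC f) -!mulnA leq_mul2l h orbT.
apply: (leq_trans h2); apply: (leq_trans h1).
by rewrite -!mulnA (mulnC Y).
Qed.
Lemma contra_aux A B n f P : 0 < B -> n.+1 <= P -> P * B <= A -> A * (f + 1) <= B * f * n -> False.
Proof.
move=> hB hP hA h.
have h1 : n.+1 * B * (f + 1) <= B * f * n.
  apply: (leq_trans _ h); rewrite leq_mul2r; apply/orP; right.
  apply: (leq_trans _ hA); by rewrite leq_mul2r hP orbT.
move: h1; rewrite -!mulnA (mulnC n.+1) -mulnA leq_pmul2l // => h2.
nia.
Qed.
Lemma size_aux f d m x : f < d -> 0 < m -> x <= (f * m + 1).*2.+1 -> x <= 5 * d * m.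
Proof. nia. Qed.

Lemma eq_aux X f : X * (f + f) = f * (2 * X).
Proof. by rewrite addnn -mul2n mulnCA [in RHS]mulnCA (mulnC X). Qed.

Lemma short (T : finType) (inU : pred T) (e M : rel T) (d f : nat) (s : T) :
    2 <= #|T| ->
    bipartite_graph inU e ->
    (forall u, inU u -> d <= deg e u) ->
    (forall v, ~~ inU v -> deg e v <= f) ->
    f < d ->
    is_matching e M ->
    inU s -> ~~ matched M s ->
    exists p, augmenting_path e M s p /\ size p <= 5 * d * (trunc_log 2 #|T|).+1.
Proof.
move=> hn Hb Hd Hf hfd HM Hs Hsm.
set n := #|T|; set m := (trunc_log 2 n).+1; set K := f * m + 1.
suff [p [hp hsz]] : exists p, augmenting_path e M s p /\ size p <= K.*2.+1.
  by exists p; split=> //; apply: size_aux hfd _ hsz.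
apply: NNPP => hno.
have noaug : forall p, augmenting_path e M s p -> K.*2.+1 < size p.
  move=> p hp; rewrite ltnNge; apply/negP => hle; apply: hno; by exists p.
have g := grow Hb HM Hs Hsm Hd Hf noaug hfd (leqnn K).
have g2 : (f + 1) ^ K <= f ^ K * n.
  by apply: (leq_trans g); rewrite leq_mul2l max_card orbT.
case: (posnP f) => [f0|fpos].
  by move: g2; rewrite /K f0 mul0n add0n expn1 exp0n.
have hb : (f + 1) ^ f >= 2 * f ^ f.
  have := bern f f; rewrite eq_aux leq_pmul2l //.
have hpow : 2 ^ m * f ^ (f * m) <= (f + 1) ^ (f * m).
  by rewrite !expnM -expnMn leq_exp2r.
have hnm : n.+1 <= 2 ^ m by apply: trunc_log_ltn.
apply: (contra_aux (A := (f + 1) ^ (f * m)) (B := f ^ (f * m)) (f := f) (P := 2 ^ m) _ hnm hpow).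
  by rewrite expn_gt0 fpos.
by move: g2; rewrite /K !expnD !expn1 (mulnC (f ^ (f * m)) f) (mulnC f (f ^ _)).
Qed.

From Stdlib Require Import Reals Lra.

Lemma ln_mono x y : (0 < x)%R -> (x <= y)%R -> (ln x <= ln y)%R.
Proof. move=> hx [hxy|->]; [left; exact: ln_increasing| right; reflexivity]. Qed.

Lemma real_part (n t : nat) : 2 <= n -> expn 2 t <= n -> (INR t.+1 <= 4 * ln (INR n))%R.
Proof.
move=> Hn Ht.
have H2 : (2 <= INR n)%R.
  have -> : 2%R = INR 2 by simpl; lra.
  by apply: le_INR; apply/leP.
have Hl2 := ln_lt_2.
have Hln2 : (ln 2 <= ln (INR n))%R by apply: ln_mono; lra.
have Hpt : (INR t * ln 2 <= ln (INR n))%R.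
  rewrite -ln_pow; last lra.
  apply: ln_mono; first by apply: pow_lt; lra.
  have -> : (2 ^ t)%R = INR (expn 2 t).
    elim: t {Ht} => [|t IH]; first by rewrite expn0 /=.
    by rewrite expnS mult_INR -IH /=; lra.
  by apply: le_INR; apply/leP.
have Ht0 := pos_INR t.
rewrite S_INR. nra.
Qed.

Theorem lemma3p3 :
  exists C : R, (0 < C)%R /\
  forall (T : finType) (inU : pred T) (e M : rel T) (d f : nat) (s : T),
    2 <= #|T| ->
    bipartite_graph inU e ->
    (forall u, inU u -> d <= deg e u) ->
    (forall v, ~~ inU v -> deg e v <= f) ->
    f < d ->
    is_matching e M ->
    inU s -> ~~ matched M s ->
    exists p : seq T, augmenting_path e M s p /\
      (INR (size p) <= C * INR d * ln (INR #|T|))%R.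
Proof.
exists 20%R; split; first lra.
move=> T inU e M d f s hn Hb Hd Hf hfd HM Hs Hsm.
have [p [hp hsz]] := short hn Hb Hd Hf hfd HM Hs Hsm.
exists p; split=> //.
have h1 : (INR (size p) <= INR (5 * d * (trunc_log 2 #|T|).+1))%R.
  by apply: le_INR; apply/leP.
have h2 := real_part hn (trunc_logP (isT : 1 < 2) (leq_trans (isT : 0 < 2) hn)).
have hd := pos_INR d.
have h3 : INR (5 * d * (trunc_log 2 #|T|).+1) =
   (5 * INR d * INR (trunc_log 2 #|T|).+1)%R.
  rewrite -!multE !mult_INR; simpl (INR 5); lra.
rewrite h3 in h1.
have hm := pos_INR (trunc_log 2 #|T|).+1.
nra.
Qed.
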